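(* For every integer $n\ge1$, the 2-dimensional substitution $\omega'_n:\Omega'_n\to\Omega'_n$ satisfies $\Omega_n\subseteq\overline{\omega'_n(\Omega'_n)}^{\sigma}:=\{\sigma^{\mathbf k}\omega'_n(x)\mid\mathbf k\in\mathbb Z^2,\ x\in\Omega'_n\}$.
   Context: Write $\bar m=m+1$. $V_n=\{(v_0,v_1,v_2)\in\mathbb{Z}^3: 0\le v_0\le v_1\le 1,\ v_1\le v_2\le n+1\}$, elements written as words $v_0v_1v_2$. A Wang tile is $t=(a,b,c,d)$ with $\mathrm{RIGHT}(t)=a$, $\mathrm{TOP}(t)=b$, $\mathrm{LEFT}(t)=c$, $\mathrm{BOTTOM}(t)=d$; $\hat t=(b,a,d,c)$, $\hat S=\{\hat t:t\in S\}$. Define (as (right, top, left, bottom)): $W_n=\{(11(i+1),11(j+1),11i,11j):1\le i,j\le n\}$; $b_n^i=(00(i+1),111,00i,11n)$, $B'_n=\{b_n^i:0\le i\le n\}$, $B_n=\{b_n^i:0\le i\le n-1\}$; $G_n=\{(01(i+1),111,00i,11(n+1)):0\le i\le n\}$; $Y_n=\{(01(i+1),112,01i,11(n+1)):1\le i\le n\}$; $A_n=\{(00(i+1),112,01i,11n):1\le i\le n\}$; $j_n^{k,l,r,s}=((0,k,l),(0,r,s),(0,s,r+n),(0,l,k+n))$ for $(k,l),(r,s)\in\{(0,0),(0,1),(1,1)\}$; $J'_n$ is the set of these 9 tiles and $J_n=J'_n\setminus\{j_n^{0,0,1,1},j_n^{1,1,0,0}\}$. $\mathcal T'_n=W_n\cup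 B'_n\cup G_n\cup Y_n\cup A_n\cup\hat B'_n\cup\hat G_n\cup\hat Y_n\cup\hat A_n\cup J'_n$ and $\mathcal T_n=W_n\cup B_n\cup G_n\cup Y_n\cup\hat B_n\cup\hat G_n\cup\hat Y_n\cup J_n$. $\Omega'_n$ (resp. $\Omega_n$) is the set of configurations $x:\mathbb Z^2\to\mathcal T'_n$ (resp. $\mathcal T_n$) with $\mathrm{RIGHT}(x(\mathbf m))=\mathrm{LEFT}(x(\mathbf m+\mathbf e_1))$ and $\mathrm{TOP}(x(\mathbf m))=\mathrm{BOTTOM}(x(\mathbf m+\mathbf e_2))$; $(\sigma^{\mathbf k}x)_{\mathbf m}=x_{\mathbf m+\mathbf k}$. Labels of a valid rectangular pattern: bottom/top labels read left to right along bottom/top row, left/right labels read bottom to top along left/right column. $\tau_n:V_n\to V_n^*$ is $\tau_n(xyz)=(0,x-y+1,n)\cdot(11n)^{z-x-1}\cdot(11\bar n)^{n+1-z}$ if $x\ne z$, and $\tau_n(xyz)=(0,x-y+1,n+1)\cdot(11\bar n)^{n-z}$ if $x=z$. For $t=(\alpha,\beta,u,v)\in\mathcal T'_n$, $\omega'_n(t)$ is the unique valid rectangular pattern over $\mathcal T'_n$ with right, top, left, bottom labels $\tau_n(\alpha),\tau_n(\beta),\tau_n(u),\tau_n(v)$. For $x\in\Omega'_n$, $\omega'_n(x)$ is the configuration obtained by concatenating the patterns $\omega'_n(x_{\mathbf m})$ according to the positions $\mathbf m$, with the lower-left cell of $\omega'_n(x_{\mathbf 0})$ at the origin; it lies in $\Omega'_n$.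 *)

(* Defs.v *)
From Stdlib Require Import ZArith List.
Import ListNotations.
Open Scope Z_scope.

Definition V := (Z * Z * Z)%type.

Definition in_Vn (n : Z) (v : V) : Prop :=
  let '(v0, v1, v2) := v in 0 <= v0 <= v1 /\ v1 <= 1 /\ v1 <= v2 <= n + 1.

Definition tile := (V * V * V * V)%type.
Definition mkT (a b c d : V) : tile := (a, b, c, d).
Definition RIGHT (t : tile) : V := let '(a, _, _, _) := t in a.
Definition TOP (t : tile) : V := let '(_, b, _, _) := t in b.
Definition LEFT (t : tile) : V := let '(_, _, c, _) := t in c.
Definition BOTTOM (t : tile) : V := let '(_, _, _, d) := t in d.

Definition hat (t : tile) : tile := mkT (TOP t) (RIGHT t) (BOTTOM t) (LEFT t).

Definition tileset := tile -> Prop.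
Definition hatS (S : tileset) : tileset := fun t => exists u, S u /\ t = hat u.
Definition unionS (S1 S2 : tileset) : tileset := fun t => S1 t \/ S2 t.

Definition Wn (n : Z) : tileset := fun t => exists i j, 1 <= i <= n /\ 1 <= j <= n /\
  t = mkT (1,1,i+1) (1,1,j+1) (1,1,i) (1,1,j).

Definition btile (n i : Z) : tile := mkT (0,0,i+1) (1,1,1) (0,0,i) (1,1,n).
Definition B'n (n : Z) : tileset := fun t => exists i, 0 <= i <= n /\ t = btile n i.
Definition Bn (n : Z) : tileset := fun t => exists i, 0 <= i <= n - 1 /\ t = btile n i.

Definition Gn (n : Z) : tileset := fun t => exists i, 0 <= i <= n /\
  t = mkT (0,1,i+1) (1,1,1) (0,0,i) (1,1,n+1).
Definition Yn (n : Z) : tileset := fun t => exists i, 1 <= i <= n /\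
  t = mkT (0,1,i+1) (1,1,2) (0,1,i) (1,1,n+1).
Definition An (n : Z) : tileset := fun t => exists i, 1 <= i <= n /\
  t = mkT (0,0,i+1) (1,1,2) (0,1,i) (1,1,n).

Definition jtile (n k l r s : Z) : tile := mkT (0,k,l) (0,r,s) (0,s,r+n) (0,l,k+n).
Definition jpair (k l : Z) : Prop := (k, l) = (0, 0) \/ (k, l) = (0, 1) \/ (k, l) = (1, 1).
Definition J'n (n : Z) : tileset := fun t => exists k l r s, jpair k l /\ jpair r s /\
  t = jtile n k l r s.
Definition Jn (n : Z) : tileset := fun t =>
  J'n n t /\ t <> jtile n 0 0 1 1 /\ t <> jtile n 1 1 0 0.

Definition T'n (n : Z) : tileset := fun t =>
  Wn n t \/ B'n n t \/ Gn n t \/ Yn n t \/ An n t \/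
  hatS (B'n n) t \/ hatS (Gn n) t \/ hatS (Yn n) t \/ hatS (An n) t \/ J'n n t.
Definition Tn (n : Z) : tileset := fun t =>
  Wn n t \/ Bn n t \/ Gn n t \/ Yn n t \/
  hatS (Bn n) t \/ hatS (Gn n) t \/ hatS (Yn n) t \/ Jn n t.

Definition config := Z -> Z -> tile.
Definition valid_config (S : tileset) (x : config) : Prop :=
  forall a b, S (x a b) /\ RIGHT (x a b) = LEFT (x (a + 1) b) /\
              TOP (x a b) = BOTTOM (x a (b + 1)).
Definition Omega'n (n : Z) (x : config) : Prop := valid_config (T'n n) x.
Definition Omegan (n : Z) (x : config) : Prop := valid_config (Tn n) x.

Definition sigma_shift (k1 k2 : Z) (x : config) : config := fun a b => x (a + k1) (b + k2).

Definition tau (n : Z) (v : V) : list V :=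
  let '(x, y, z) := v in
  if x =? z then (0, x - y + 1, n + 1) :: repeat (1, 1, n + 1) (Z.to_nat (n - z))
  else (0, x - y + 1, n) :: (repeat (1, 1, n) (Z.to_nat (z - x - 1))
                             ++ repeat (1, 1, n + 1) (Z.to_nat (n + 1 - z))).

Definition dfltV : V := (0, 0, 0).

(* p is a valid rectangular pattern of width w, height h over T'_n with
   right, top, left, bottom labels R, T, L, B (cells indexed (i,j),
   0 <= i < w, 0 <= j < h, (0,0) = lower-left cell). *)
Definition valid_pattern (n : Z) (w h : nat) (p : nat -> nat -> tile)
    (R T L B : list V) : Prop :=
  length B = w /\ length T = w /\ length L = h /\ length R = h /\
  (forall i j, (i < w)%nat -> (j < h)%nat -> T'n n (p i j)) /\
  (forall i j, (S i < w)%nat -> (j < h)%nat -> RIGHT (p i j) = LEFT (p (S i) j)) /\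
  (forall i j, (i < w)%nat -> (S j < h)%nat -> TOP (p i j) = BOTTOM (p i (S j))) /\
  (forall i, (i < w)%nat -> BOTTOM (p i 0%nat) = nth i B dfltV) /\
  (forall i, (i < w)%nat -> TOP (p i (h - 1)%nat) = nth i T dfltV) /\
  (forall j, (j < h)%nat -> LEFT (p 0%nat j) = nth j L dfltV) /\
  (forall j, (j < h)%nat -> RIGHT (p (w - 1)%nat j) = nth j R dfltV).

(* omega'_n(t): the patterns satisfying this are the (unique) pattern omega'_n(t). *)
Definition is_omega'_tile (n : Z) (t : tile) (w h : nat) (p : nat -> nat -> tile) : Prop :=
  valid_pattern n w h p (tau n (RIGHT t)) (tau n (TOP t)) (tau n (LEFT t)) (tau n (BOTTOM t)).

(* Offsets of the blocks when concatenating. *)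
Fixpoint psum (f : Z -> Z) (k : nat) : Z :=
  match k with O => 0 | S k' => psum f k' + f (Z.of_nat k') end.
Fixpoint nsum (f : Z -> Z) (k : nat) : Z :=
  match k with O => 0 | S k' => nsum f k' + f (- Z.of_nat k) end.
Definition offset (f : Z -> Z) (c : Z) : Z :=
  if 0 <=? c then psum f (Z.to_nat c) else - nsum f (Z.to_nat (- c)).

(* width of block column c and height of block row r of omega'_n(x) *)
Definition colw (n : Z) (x : config) (c : Z) : nat := length (tau n (BOTTOM (x c 0))).
Definition rowh (n : Z) (x : config) (r : Z) : nat := length (tau n (LEFT (x 0 r))).

(* z = omega'_n(x): the block at position m = (m1,m2), whose lower-left cell is
   at (offset colw m1, offset rowh m2), is the pattern omega'_n(x_m);
   the lower-left cell of omega'_n(x_0) is at the origin. *)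
Definition is_omega'_config (n : Z) (x z : config) : Prop :=
  forall m1 m2,
    is_omega'_tile n (x m1 m2) (colw n x m1) (rowh n x m2)
      (fun i j => z (offset (fun c => Z.of_nat (colw n x c)) m1 + Z.of_nat i)
                    (offset (fun r => Z.of_nat (rowh n x r)) m2 + Z.of_nat j)).

(* Main.v *)
Require Import Defs.
From Stdlib Require Import ZArith List Lia IndefiniteDescription FunctionalExtensionality.
Import ListNotations.
Open Scope Z_scope.

Definition l0 (v : V) : Z := fst (fst v).
Definition l1 (v : V) : Z := snd (fst v).
Definition l2 (v : V) : Z := snd v.

Definition wtile (i j : Z) : tile := mkT (1,1,i+1) (1,1,j+1) (1,1,i) (1,1,j).
Definition rtile (n s s' i : Z) : tile := mkT (0,s',i+1) (1,1,1+s) (0,s,i) (1,1,n+s').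
Definition htile (n s s' i : Z) : tile := mkT (1,1,1+s) (0,s',i+1) (1,1,n+s') (0,s,i).
Definition rowc (n s s' i : Z) : Prop := 0 <= s <= s' /\ s' <= 1 /\ s <= i /\ i + 1 - s' <= n.
Definition rowc' (n s s' i : Z) : Prop := 0 <= s <= 1 /\ 0 <= s' <= 1 /\ s <= i <= n.
Definition jc (k l r s : Z) : Prop := jpair k l /\ jpair r s /\
  ~ (k = 0 /\ l = 0 /\ r = 1 /\ s = 1) /\ ~ (k = 1 /\ l = 1 /\ r = 0 /\ s = 0).

Inductive TnC (n : Z) : tile -> Prop :=
| cW i j : 1 <= i <= n -> 1 <= j <= n -> TnC n (wtile i j)
| cR s s' i : rowc n s s' i -> TnC n (rtile n s s' i)
| cH s s' i : rowc n s s' i -> TnC n (htile n s s' i)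
| cJ k l r s : jc k l r s -> TnC n (jtile n k l r s).

Inductive TnC' (n : Z) : tile -> Prop :=
| cW' i j : 1 <= i <= n -> 1 <= j <= n -> TnC' n (wtile i j)
| cR' s s' i : rowc' n s s' i -> TnC' n (rtile n s s' i)
| cH' s s' i : rowc' n s s' i -> TnC' n (htile n s s' i)
| cJ' k l r s : jpair k l -> jpair r s -> TnC' n (jtile n k l r s).

Lemma jpair_cases k l : jpair k l <-> (k = 0 /\ l = 0) \/ (k = 0 /\ l = 1) \/ (k = 1 /\ l = 1).
Proof. unfold jpair; split; intros [H|[H|H]]; try (inversion H; subst; tauto);
  destruct H as [-> ->]; tauto. Qed.

Lemma Tn_TnC n t : Tn n t -> TnC n t.
Proof.
  unfold Tn, Wn, Bn, Gn, Yn, hatS, Jn, J'n, btile.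
  intros [H|[H|[H|[H|[H|[H|[H|H]]]]]]].
  - destruct H as (i&j&Hi&Hj&->). apply cW; lia.
  - destruct H as (i&Hi&->). replace (mkT (0,0,i+1) (1,1,1) (0,0,i) (1,1,n)) with (rtile n 0 0 i)
      by (unfold rtile; f_equal; f_equal; lia). apply cR; unfold rowc; lia.
  - destruct H as (i&Hi&->). replace (mkT (0,1,i+1) (1,1,1) (0,0,i) (1,1,n+1)) with (rtile n 0 1 i)
      by (unfold rtile; f_equal; f_equal; lia). apply cR; unfold rowc; lia.
  - destruct H as (i&Hi&->). replace (mkT (0,1,i+1) (1,1,2) (0,1,i) (1,1,n+1)) with (rtile n 1 1 i)
      by (unfold rtile; f_equal; f_equal; lia). apply cR; unfold rowc; lia.
  - destruct H as (u&(i&Hi&->)&->). unfold hat; simpl.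
    replace (mkT (1,1,1) (0,0,i+1) (1,1,n) (0,0,i)) with (htile n 0 0 i)
      by (unfold htile; f_equal; f_equal; lia). apply cH; unfold rowc; lia.
  - destruct H as (u&(i&Hi&->)&->). unfold hat; simpl.
    replace (mkT (1,1,1) (0,1,i+1) (1,1,n+1) (0,0,i)) with (htile n 0 1 i)
      by (unfold htile; f_equal; f_equal; lia). apply cH; unfold rowc; lia.
  - destruct H as (u&(i&Hi&->)&->). unfold hat; simpl.
    replace (mkT (1,1,2) (0,1,i+1) (1,1,n+1) (0,1,i)) with (htile n 1 1 i)
      by (unfold htile; f_equal; f_equal; lia). apply cH; unfold rowc; lia.
  - destruct H as ((k&l&r&s&H1&H2&->)&H3&H4). apply cJ. unfold jc. repeat split; auto;
    intros (->&->&->&->); auto.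
Qed.

Lemma TnC_Tn n t : TnC n t -> Tn n t.
Proof.
  unfold Tn, Wn, Bn, Gn, Yn, hatS, Jn, J'n, btile.
  intros []; unfold rowc, jc in *.
  - left. exists i, j. auto.
  - destruct H as (H1&H2&H3&H4).
    assert (s = 0 /\ s' = 0 \/ s = 0 /\ s' = 1 \/ s = 1 /\ s' = 1) as [[-> ->]|[[-> ->]|[-> ->]]] by lia.
    + right; left. exists i. split. lia. unfold rtile; f_equal; f_equal; lia.
    + right; right; left. exists i. split. lia. unfold rtile; f_equal; f_equal; lia.
    + right; right; right; left. exists i. split. lia. unfold rtile; f_equal; f_equal; lia.
  - destruct H as (H1&H2&H3&H4).
    assert (s = 0 /\ s' = 0 \/ s = 0 /\ s' = 1 \/ s = 1 /\ s' = 1) as [[-> ->]|[[-> ->]|[-> ->]]] by lia.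
    + do 4 right; left. exists (mkT (0,0,i+1) (1,1,1) (0,0,i) (1,1,n)). split. exists i. split; auto; lia.
      unfold htile, hat; simpl; f_equal; f_equal; lia.
    + do 5 right; left. exists (mkT (0,1,i+1) (1,1,1) (0,0,i) (1,1,n+1)). split. exists i. split; auto; lia.
      unfold htile, hat; simpl; f_equal; f_equal; lia.
    + do 6 right; left. exists (mkT (0,1,i+1) (1,1,2) (0,1,i) (1,1,n+1)). split. exists i. split; auto; lia.
      unfold htile, hat; simpl; f_equal; f_equal; lia.
  - do 7 right. destruct H as (H1&H2&H3&H4). split. exists k, l, r, s. auto.
    split; intro E; unfold jtile, mkT in E; inversion E; subst; lia.
Qed.

Lemma T'n_of n t : TnC' n t -> T'n n t.
Proof.
  unfold T'n, Wn, B'n, Gn, Yn, An, hatS, J'n, btile.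
  intros []; unfold rowc' in *.
  - left. exists i, j. auto.
  - destruct H as (H1&H2&H3).
    assert (s = 0 /\ s' = 0 \/ s = 0 /\ s' = 1 \/ s = 1 /\ s' = 1 \/ s = 1 /\ s' = 0)
      as [[-> ->]|[[-> ->]|[[-> ->]|[-> ->]]]] by lia.
    + right; left. exists i. split. lia. unfold rtile; f_equal; f_equal; lia.
    + right; right; left. exists i. split. lia. unfold rtile; f_equal; f_equal; lia.
    + right; right; right; left. exists i. split. lia. unfold rtile; f_equal; f_equal; lia.
    + do 4 right; left. exists i. split. lia. unfold rtile; f_equal; f_equal; lia.
  - destruct H as (H1&H2&H3).
    assert (s = 0 /\ s' = 0 \/ s = 0 /\ s' = 1 \/ s = 1 /\ s' = 1 \/ s = 1 /\ s' = 0)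
      as [[-> ->]|[[-> ->]|[[-> ->]|[-> ->]]]] by lia.
    + do 5 right; left. exists (mkT (0,0,i+1) (1,1,1) (0,0,i) (1,1,n)). split. exists i. split; auto; lia.
      unfold htile, hat; simpl; f_equal; f_equal; lia.
    + do 6 right; left. exists (mkT (0,1,i+1) (1,1,1) (0,0,i) (1,1,n+1)). split. exists i. split; auto; lia.
      unfold htile, hat; simpl; f_equal; f_equal; lia.
    + do 7 right; left. exists (mkT (0,1,i+1) (1,1,2) (0,1,i) (1,1,n+1)). split. exists i. split; auto; lia.
      unfold htile, hat; simpl; f_equal; f_equal; lia.
    + do 8 right; left. exists (mkT (0,0,i+1) (1,1,2) (0,1,i) (1,1,n)). split. exists i. split; auto; lia.
      unfold htile, hat; simpl; f_equal; f_equal; lia.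
  - do 9 right. exists k, l, r, s. auto.
Qed.

Lemma T'n_TnC' n t : T'n n t -> TnC' n t.
Proof.
  unfold T'n, Wn, B'n, Gn, Yn, An, hatS, J'n, btile.
  intros [H|[H|[H|[H|[H|[H|[H|[H|[H|H]]]]]]]]].
  - destruct H as (i&j&Hi&Hj&->). apply cW'; lia.
  - destruct H as (i&Hi&->). replace (mkT (0,0,i+1) (1,1,1) (0,0,i) (1,1,n)) with (rtile n 0 0 i)
      by (unfold rtile; f_equal; f_equal; lia). apply cR'; unfold rowc'; lia.
  - destruct H as (i&Hi&->). replace (mkT (0,1,i+1) (1,1,1) (0,0,i) (1,1,n+1)) with (rtile n 0 1 i)
      by (unfold rtile; f_equal; f_equal; lia). apply cR'; unfold rowc'; lia.
  - destruct H as (i&Hi&->). replace (mkT (0,1,i+1) (1,1,2) (0,1,i) (1,1,n+1)) with (rtile n 1 1 i)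
      by (unfold rtile; f_equal; f_equal; lia). apply cR'; unfold rowc'; lia.
  - destruct H as (i&Hi&->). replace (mkT (0,0,i+1) (1,1,2) (0,1,i) (1,1,n)) with (rtile n 1 0 i)
      by (unfold rtile; f_equal; f_equal; lia). apply cR'; unfold rowc'; lia.
  - destruct H as (u&(i&Hi&->)&->). unfold hat; simpl.
    replace (mkT (1,1,1) (0,0,i+1) (1,1,n) (0,0,i)) with (htile n 0 0 i)
      by (unfold htile; f_equal; f_equal; lia). apply cH'; unfold rowc'; lia.
  - destruct H as (u&(i&Hi&->)&->). unfold hat; simpl.
    replace (mkT (1,1,1) (0,1,i+1) (1,1,n+1) (0,0,i)) with (htile n 0 1 i)
      by (unfold htile; f_equal; f_equal; lia). apply cH'; unfold rowc'; lia.
  - destruct H as (u&(i&Hi&->)&->). unfold hat; simpl.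
    replace (mkT (1,1,2) (0,1,i+1) (1,1,n+1) (0,1,i)) with (htile n 1 1 i)
      by (unfold htile; f_equal; f_equal; lia). apply cH'; unfold rowc'; lia.
  - destruct H as (u&(i&Hi&->)&->). unfold hat; simpl.
    replace (mkT (1,1,2) (0,0,i+1) (1,1,n) (0,1,i)) with (htile n 1 0 i)
      by (unfold htile; f_equal; f_equal; lia). apply cH'; unfold rowc'; lia.
  - destruct H as (k&l&r&s&H1&H2&->). apply cJ'; auto.
Qed.

Lemma jpair_iff k l : jpair k l <-> 0 <= k <= l /\ l <= 1.
Proof. rewrite jpair_cases. lia. Qed.

Lemma TnC'_det n t1 t2 : TnC' n t1 -> TnC' n t2 -> LEFT t1 = LEFT t2 -> BOTTOM t1 = BOTTOM t2 -> t1 = t2.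
Proof.
  intros H1 H2 HL HB.
  destruct H1; destruct H2;
  unfold wtile, rtile, htile, jtile, mkT, LEFT, BOTTOM, rowc' in *;
  inversion HL; inversion HB; subst; try lia;
  try (repeat f_equal; lia).
Qed.

Lemma TnC'_Vn n t : 1 <= n -> TnC' n t ->
  in_Vn n (RIGHT t) /\ in_Vn n (TOP t) /\ in_Vn n (LEFT t) /\ in_Vn n (BOTTOM t).
Proof.
  intros Hn H; destruct H; unfold wtile, rtile, htile, jtile, mkT, RIGHT, TOP, LEFT, BOTTOM, in_Vn, rowc' in *;
  try rewrite jpair_cases in *; lia.
Qed.

Definition word_ok (n : Z) (v : V) (f : nat -> V) (len : nat) : Prop :=
  length (tau n v) = len /\ forall i, (i < len)%nat -> nth i (tau n v) dfltV = f i.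

Lemma nth_repeat' {A} (a d : A) m i : (i < m)%nat -> nth i (repeat a m) d = a.
Proof. revert i; induction m; intros [|i] Hi; simpl; auto; try lia. apply IHm; lia. Qed.

Lemma tau_len n x y z : 1 <= n -> in_Vn n (x,y,z) -> length (tau n (x,y,z)) = Z.to_nat (n+1-x).
Proof.
  unfold in_Vn, tau; intros Hn H; cbn in H. destruct (Z.eqb_spec x z).
  - simpl. rewrite repeat_length. lia.
  - simpl. rewrite length_app, !repeat_length. lia.
Qed.

Lemma tau_nth0 n x y z : nth 0 (tau n (x,y,z)) dfltV = (0, x-y+1, if x =? z then n+1 else n).
Proof. unfold tau. destruct (x =? z); reflexivity. Qed.

Lemma tau_nthS n x y z i : in_Vn n (x,y,z) -> (1 <= i)%nat -> (Z.of_nat i < n+1-x) ->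
  nth i (tau n (x,y,z)) dfltV = (1,1, if x =? z then n+1 else if Z.of_nat i <=? z-x-1 then n else n+1).
Proof.
  unfold in_Vn, tau; intros H Hi Hl; cbn in H. destruct i as [|i]; [lia|]. destruct (Z.eqb_spec x z).
  - simpl. apply nth_repeat'. lia.
  - destruct (Z.leb_spec (Z.of_nat (S i)) (z-x-1)); simpl.
    + rewrite app_nth1 by (rewrite repeat_length; lia). rewrite nth_repeat' by lia. reflexivity.
    + rewrite app_nth2 by (rewrite repeat_length; lia). rewrite nth_repeat'. reflexivity.
      rewrite repeat_length; lia.
Qed.

Lemma tau_inj n v v' : 1 <= n -> in_Vn n v -> in_Vn n v' -> tau n v = tau n v' -> v = v'.
Proof.
  destruct v as [[x y] z], v' as [[x' y'] z']. intros Hn H H' E.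
  assert (L := f_equal (@length V) E). rewrite (tau_len _ _ _ _ Hn H), (tau_len _ _ _ _ Hn H') in L.
  assert (N0 := f_equal (fun l => nth 0 l dfltV) E). cbv beta in N0. rewrite !tau_nth0 in N0.
  unfold in_Vn in *; cbn in H, H'.
  assert (x = x') by lia. subst x'.
  destruct (Z.eqb_spec x z), (Z.eqb_spec x z'); inversion N0; try lia.
  - f_equal; [f_equal|]; lia.
  - assert (y = y') by lia. subst y'.
    destruct (Z.lt_trichotomy z z') as [Hz|[Hz|Hz]]; [|subst; reflexivity|].
    + assert (Ni := f_equal (fun l => nth (Z.to_nat (z-x)) l dfltV) E). cbv beta in Ni.
      rewrite !tau_nthS in Ni; try (unfold in_Vn; lia).
      destruct (Z.eqb_spec x z); try lia. destruct (Z.eqb_spec x z'); try lia.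
      destruct (Z.leb_spec (Z.of_nat (Z.to_nat (z - x))) (z-x-1)); try lia.
      destruct (Z.leb_spec (Z.of_nat (Z.to_nat (z - x))) (z'-x-1)); try lia.
      inversion Ni; lia.
    + assert (Ni := f_equal (fun l => nth (Z.to_nat (z'-x)) l dfltV) E). cbv beta in Ni.
      rewrite !tau_nthS in Ni; try (unfold in_Vn; lia).
      destruct (Z.eqb_spec x z); try lia. destruct (Z.eqb_spec x z'); try lia.
      destruct (Z.leb_spec (Z.of_nat (Z.to_nat (z' - x))) (z-x-1)); try lia.
      destruct (Z.leb_spec (Z.of_nat (Z.to_nat (z' - x))) (z'-x-1)); try lia.
      inversion Ni; lia.
Qed.

Lemma word_ok_inj n v v' f len : 1 <= n -> in_Vn n v -> in_Vn n v' -> word_ok n v f len -> word_ok n v' f len -> v = v'.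
Proof.
  intros Hn H H' [L1 N1] [L2 N2]. apply (tau_inj n); auto.
  apply nth_ext with (d := dfltV) (d' := dfltV). lia.
  intros i Hi. rewrite N1, N2; auto; lia.
Qed.

Definition dec (n e fb P Q : Z) : V :=
  let x := n - P - Q in (x, x + 1 - e, if fb =? 1 then x else n + 1 - Q).

Lemma dec_ok n e fb P Q (f : nat -> V) :
  1 <= n -> 0 <= P -> 0 <= Q -> n <= P + Q + 1 <= n + 1 -> 0 <= e <= 1 -> 0 <= fb <= 1 ->
  (P + Q + 1 = n -> e = 1) -> (fb = 1 -> e = 1 /\ P = 0) ->
  f 0%nat = (0, e, n + fb) ->
  (forall i, (1 <= i)%nat -> Z.of_nat i <= P + Q -> f i = (1,1, if Z.of_nat i <=? P then n else n+1)) ->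
  in_Vn n (dec n e fb P Q) /\ word_ok n (dec n e fb P Q) f (Z.to_nat (P+Q+1)).
Proof.
  intros Hn HP HQ HL He Hf H1 H2 F0 FS.
  assert (HV : in_Vn n (dec n e fb P Q)).
  { unfold dec, in_Vn; cbn. destruct (Z.eqb_spec fb 1); lia. }
  split; auto. unfold dec in *. split.
  - rewrite tau_len by auto. lia.
  - intros [|i] Hi.
    + rewrite tau_nth0, F0. destruct (Z.eqb_spec fb 1).
      * destruct (Z.eqb_spec (n-P-Q) (n-P-Q)); [|lia]. f_equal; [f_equal|]; lia.
      * destruct (Z.eqb_spec (n-P-Q) (n+1-Q)); [lia|]. f_equal; [f_equal|]; lia.
    + rewrite tau_nthS by (auto; lia). rewrite FS by lia.
      destruct (Z.eqb_spec fb 1).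
      * destruct (Z.eqb_spec (n-P-Q) (n-P-Q)); [|lia].
        destruct (Z.leb_spec (Z.of_nat (S i)) P); [lia|reflexivity].
      * destruct (Z.eqb_spec (n-P-Q) (n+1-Q)); [lia|].
        destruct (Z.leb_spec (Z.of_nat (S i)) P), (Z.leb_spec (Z.of_nat (S i)) (n + 1 - Q - (n - P - Q) - 1)); 
        try reflexivity; lia.
Qed.

Lemma Z_const (f : Z -> Z) : (forall b, f (b+1) = f b) -> forall b, f b = f 0.
Proof.
  intros H b. induction b using Z.peano_ind; auto.
  - rewrite <- IHb, <- (H b). f_equal; lia.
  - rewrite <- IHb. rewrite <- (H (Z.pred b)). f_equal; lia.
Qed.



Lemma fin_search (g : Z -> Z) (M : nat) :
  (exists i, 0 < i <= Z.of_nat M /\ g i = 0) \/ (forall i, 0 < i <= Z.of_nat M -> g i <> 0).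
Proof.
  induction M.
  - right; intros; lia.
  - destruct IHM as [(i&Hi&Hg)|H].
    + left; exists i; split; auto; lia.
    + destruct (Z.eq_dec (g (Z.of_nat (S M))) 0).
      * left; exists (Z.of_nat (S M)); split; auto; lia.
      * right; intros i Hi. destruct (Z.eq_dec i (Z.of_nat (S M))) as [->|]; auto. apply H; lia.
Qed.

Lemma first_zero (g : Z -> Z) (M : nat) :
  (exists i, 0 < i <= Z.of_nat M /\ g i = 0) ->
  exists h, 0 < h <= Z.of_nat M /\ g h = 0 /\ forall i, 0 < i < h -> g i <> 0.
Proof.
  induction M; intros (i&Hi&Hg); [lia|].
  destruct (fin_search g M) as [H|H].
  - destruct (IHM H) as (h&?&?&?). exists h; repeat split; auto; lia.
  - exists i. repeat split; auto; try lia.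
    intros j Hj. apply H.
    destruct (Z.eq_dec i (Z.of_nat (S M))); [lia|]. exfalso; apply (H i); auto; lia.
Qed.

Lemma enum_zeros (f : Z -> Z) (N : nat) :
  (forall a, exists i, 0 < i <= Z.of_nat N /\ f (a+i) = 0) ->
  exists E : Z -> Z, (forall m, f (E m) = 0) /\ (forall m, E m < E (m+1)) /\
    (forall m a, E m < a < E (m+1) -> f a <> 0) /\ (forall a, exists m, E m <= a < E (m+1)).
Proof.
  intros D.
  assert (Hn : forall a, exists b, a < b /\ f b = 0 /\ forall c, a < c < b -> f c <> 0).
  { intros a. destruct (first_zero (fun i => f (a+i)) N (D a)) as (h&H1&H2&H3).
    exists (a+h). repeat split; auto; try lia. intros c Hc. replace c with (a + (c-a)) by lia. apply H3; lia. }
  assert (Hp : forall a, exists b, b < a /\ f b = 0 /\ forall c, b < c < a -> f c <> 0).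
  { intros a. destruct (D (a - Z.of_nat N - 1)) as (i&Hi&Hf).
    destruct (first_zero (fun j => f (a-j)) N) as (h&H1&H2&H3).
    { exists (Z.of_nat N + 1 - i). split; [lia|]. rewrite <- Hf. f_equal; lia. }
    exists (a-h). repeat split; auto; try lia. intros c Hc. replace c with (a - (a-c)) by lia. apply H3; lia. }
  set (nx := fun a => proj1_sig (constructive_indefinite_description _ (Hn a))).
  set (pv := fun a => proj1_sig (constructive_indefinite_description _ (Hp a))).
  assert (Nx : forall a, a < nx a /\ f (nx a) = 0 /\ forall c, a < c < nx a -> f c <> 0).
  { intros a. exact (proj2_sig (constructive_indefinite_description _ (Hn a))). }
  assert (Pv : forall a, pv a < a /\ f (pv a) = 0 /\ forall c, pv a < c < a -> f c <> 0).
  { intros a. exact (proj2_sig (constructive_indefinite_description _ (Hp a))). }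
  clearbody nx pv.
  assert (NP : forall a, f a = 0 -> nx (pv a) = a).
  { intros a Ha. destruct (Pv a) as (A1&A2&A3). destruct (Nx (pv a)) as (B1&B2&B3).
    destruct (Z.lt_trichotomy (nx (pv a)) a) as [L|[L|L]]; auto.
    - exfalso. apply (A3 (nx (pv a))); auto.
    - exfalso. apply (B3 a); auto. }
  set (e0 := nx 0).
  set (E := fun m => if 0 <=? m then Nat.iter (Z.to_nat m) nx e0 else Nat.iter (Z.to_nat (-m)) pv e0).
  assert (Z1 : forall k, f (Nat.iter k nx e0) = 0).
  { induction k; simpl. apply Nx. apply Nx. }
  assert (Z2 : forall k, f (Nat.iter k pv e0) = 0).
  { induction k; simpl. apply Nx. apply Pv. }
  assert (EZ : forall m, f (E m) = 0).
  { intros m. unfold E. destruct (0 <=? m); auto. }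
  assert (ES : forall m, E (m+1) = nx (E m)).
  { intros m. unfold E. destruct (Z.leb_spec 0 m).
    - destruct (Z.leb_spec 0 (m+1)); [|lia]. replace (Z.to_nat (m+1)) with (S (Z.to_nat m)) by lia. reflexivity.
    - destruct (Z.leb_spec 0 (m+1)).
      + assert (m = -1) by lia. subst. simpl. symmetry. apply NP. apply Nx.
      + replace (Z.to_nat (-m)) with (S (Z.to_nat (-(m+1)))) by lia. simpl. symmetry. apply NP.
        apply Z2. }
  exists E. split; auto. split; [|split].
  - intros m. rewrite ES. apply Nx.
  - intros m a Ha. rewrite ES in Ha. apply (proj2 (proj2 (Nx (E m)))). lia.
  - assert (Up : forall k : nat, E (Z.of_nat k) >= E 0 + Z.of_nat k).
    { induction k. simpl; lia. replace (Z.of_nat (S k)) with (Z.of_nat k + 1) by lia.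
      rewrite ES. destruct (Nx (E (Z.of_nat k))). lia. }
    assert (Dn : forall k : nat, E (- Z.of_nat k) <= E 0 - Z.of_nat k).
    { induction k. simpl; lia.
      assert (H := ES (- Z.of_nat (S k))). replace (- Z.of_nat (S k) + 1) with (- Z.of_nat k) in H by lia.
      destruct (Nx (E (- Z.of_nat (S k)))). lia. }
    assert (Srch : forall d : nat, forall j a, E j <= a < E (j + Z.of_nat d) -> exists m, E m <= a < E (m+1)).
    { induction d; intros j a Ha. simpl in Ha. replace (j+0) with j in Ha by lia. lia.
      destruct (Z_lt_le_dec a (E (j+1))). exists j; lia.
      apply (IHd (j+1)). replace (j + 1 + Z.of_nat d) with (j + Z.of_nat (S d)) by lia. lia. }
    intros a. set (K := Z.to_nat (Z.abs (a - E 0) + 1)).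
    apply (Srch (2*K)%nat (- Z.of_nat K)).
    replace (- Z.of_nat K + Z.of_nat (2 * K)) with (Z.of_nat K) by lia.
    specialize (Up K). specialize (Dn K). lia.
Qed.

Definition ct (y : config) (a : Z) : Z := l0 (BOTTOM (y a 0)).
Definition rt (y : config) (b : Z) : Z := l0 (LEFT (y 0 b)).
Definition yT (y : config) : config := fun a b => hat (y b a).

Lemma TnC_TnC' n t : TnC n t -> TnC' n t.
Proof.
  intros [i j Hi Hj|s s' i Hc|s s' i Hc|k l r s Hc].
  - apply cW'; auto.
  - apply cR'; unfold rowc, rowc' in *; lia.
  - apply cH'; unfold rowc, rowc' in *; lia.
  - apply cJ'; unfold jc in *; tauto.
Qed.

Lemma TnC_facts n t : TnC n t -> l0 (RIGHT t) = l0 (LEFT t) /\ l0 (TOP t) = l0 (BOTTOM t) /\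
  (l0 (LEFT t) = 0 \/ l0 (LEFT t) = 1) /\ (l0 (BOTTOM t) = 0 \/ l0 (BOTTOM t) = 1).
Proof. intros []; cbn; lia. Qed.

Lemma TnC_hat n t : TnC n t -> TnC n (hat t).
Proof.
  intros []; cbn.
  - change (TnC n (wtile j i)). constructor; auto.
  - change (TnC n (htile n s s' i)). constructor; auto.
  - change (TnC n (rtile n s s' i)). constructor; auto.
  - change (TnC n (jtile n r s k l)). constructor. unfold jc in *. tauto.
Qed.

Lemma hat_hat t : hat (hat t) = t.
Proof. destruct t as [[[a b] c] d]. reflexivity. Qed.



Lemma Ytile n y a b : Omegan n y -> TnC n (y a b).
Proof. intros H. apply Tn_TnC. apply (H a b). Qed.
Lemma Yh n y a b : Omegan n y -> RIGHT (y a b) = LEFT (y (a+1) b).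
Proof. intros H. apply (H a b). Qed.
Lemma Yv n y a b : Omegan n y -> TOP (y a b) = BOTTOM (y a (b+1)).
Proof. intros H. apply (H a b). Qed.

Lemma Omegan_T n y : Omegan n y -> Omegan n (yT y).
Proof.
  intros H a b. unfold yT. split; [|split].
  - apply TnC_Tn. apply TnC_hat. apply (Ytile n y); auto.
  - cbn. change (TOP (y b a) = BOTTOM (y b (a+1))). apply (Yv n); auto.
  - cbn. change (RIGHT (y b a) = LEFT (y (b+1) a)). apply (Yh n); auto.
Qed.

Lemma ct_T y a : ct (yT y) a = rt y a.
Proof. reflexivity. Qed.
Lemma rt_T y b : rt (yT y) b = ct y b.
Proof. reflexivity. Qed.

Lemma colcst n y a b : Omegan n y -> l0 (BOTTOM (y a b)) = ct y a.
Proof.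
  intros H. unfold ct. apply (Z_const (fun b => l0 (BOTTOM (y a b)))). intros c.
  rewrite <- (Yv n y a c H). apply (TnC_facts n). apply Ytile; auto.
Qed.

Lemma rowcst n y a b : Omegan n y -> l0 (LEFT (y a b)) = rt y b.
Proof.
  intros H. unfold rt. apply (Z_const (fun a => l0 (LEFT (y a b)))). intros c.
  rewrite <- (Yh n y c b H). apply (TnC_facts n). apply Ytile; auto.
Qed.

Lemma ct01 n y a : Omegan n y -> ct y a = 0 \/ ct y a = 1.
Proof. intros H. unfold ct. apply (TnC_facts n). apply Ytile; auto. Qed.
Lemma rt01 n y b : Omegan n y -> rt y b = 0 \/ rt y b = 1.
Proof. intros H. unfold rt. apply (TnC_facts n). apply Ytile; auto. Qed.

Ltac tfacts n y a b H :=
  let T := fresh "T" in let L := fresh "CL" in let B := fresh "CB" in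
  assert (T := Ytile n y a b H); assert (L := rowcst n y a b H); assert (B := colcst n y a b H).

Lemma clsW n y a b : Omegan n y -> rt y b = 1 -> ct y a = 1 ->
  exists i j, 1 <= i <= n /\ 1 <= j <= n /\ y a b = wtile i j.
Proof.
  intros H Hr Hc. tfacts n y a b H. destruct T; cbn in *; try lia. eauto.
Qed.
Lemma clsR n y a b : Omegan n y -> rt y b = 0 -> ct y a = 1 ->
  exists s s' i, rowc n s s' i /\ y a b = rtile n s s' i.
Proof.
  intros H Hr Hc. tfacts n y a b H. destruct T; cbn in *; try lia. eauto.
Qed.
Lemma clsH n y a b : Omegan n y -> rt y b = 1 -> ct y a = 0 ->
  exists s s' i, rowc n s s' i /\ y a b = htile n s s' i.
Proof.
  intros H Hr Hc. tfacts n y a b H. destruct T; cbn in *; try lia. eauto.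
Qed.
Lemma clsJ n y a b : Omegan n y -> rt y b = 0 -> ct y a = 0 ->
  exists k l r s, jc k l r s /\ y a b = jtile n k l r s.
Proof.
  intros H Hr Hc. tfacts n y a b H. destruct T; cbn in *; try lia. eauto 10.
Qed.

Lemma step_h n y a b : Omegan n y -> ct y a = 1 -> l2 (RIGHT (y a b)) = l2 (LEFT (y a b)) + 1.
Proof.
  intros H Hc. tfacts n y a b H. destruct T; cbn in *; lia.
Qed.
Lemma step_v n y a b : Omegan n y -> rt y b = 1 -> l2 (TOP (y a b)) = l2 (BOTTOM (y a b)) + 1.
Proof.
  intros H Hc. tfacts n y a b H. destruct T; cbn in *; lia.
Qed.

Lemma hrun n y a b m : Omegan n y -> 0 <= m -> (forall i, 0 < i <= m -> ct y (a+i) = 1) ->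
  l2 (RIGHT (y (a+m) b)) = l2 (RIGHT (y a b)) + m.
Proof.
  intros H Hm. pattern m; apply natlike_ind; auto.
  - intros. replace (a+0) with a by lia. lia.
  - intros x Hx IH Hc. rewrite step_h with (n:=n) by (auto; apply Hc; lia).
    replace (a + Z.succ x) with ((a + x) + 1) by lia. rewrite <- (Yh n) by auto.
    rewrite IH. lia. intros i Hi; apply Hc; lia.
Qed.
Lemma vrun n y a b m : Omegan n y -> 0 <= m -> (forall j, 0 < j <= m -> rt y (b+j) = 1) ->
  l2 (TOP (y a (b+m))) = l2 (TOP (y a b)) + m.
Proof.
  intros H Hm. pattern m; apply natlike_ind; auto.
  - intros. replace (b+0) with b by lia. lia.
  - intros x Hx IH Hc. rewrite step_v with (n:=n) by (auto; apply Hc; lia).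
    replace (b + Z.succ x) with ((b + x) + 1) by lia. rewrite <- (Yv n) by auto.
    rewrite IH. lia. intros i Hi; apply Hc; lia.
Qed.

Lemma lab_V n y a b : 1 <= n -> Omegan n y ->
  in_Vn n (RIGHT (y a b)) /\ in_Vn n (TOP (y a b)) /\ in_Vn n (LEFT (y a b)) /\ in_Vn n (BOTTOM (y a b)).
Proof. intros Hn H. apply TnC'_Vn; auto. apply TnC_TnC'. apply Ytile; auto. Qed.

Lemma inV_l2 n v : in_Vn n v -> 0 <= l2 v <= n + 1.
Proof. destruct v as [[x y] z]; unfold in_Vn; cbn; lia. Qed.

Lemma dens_col n y : 1 <= n -> Omegan n y ->
  forall a, exists i, 0 < i <= Z.of_nat (Z.to_nat (n+2)) /\ ct y (a+i) = 0.
Proof.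
  intros Hn H a. destruct (fin_search (fun i => ct y (a+i)) (Z.to_nat (n+2))) as [X|X]; auto.
  exfalso. assert (E := hrun n y a 0 (n+2) H ltac:(lia)).
  destruct (lab_V n y a 0 Hn H) as (V1&_). destruct (lab_V n y (a+(n+2)) 0 Hn H) as (V2&_).
  apply inV_l2 in V1. apply inV_l2 in V2. rewrite E in V2. lia.
  intros i Hi. destruct (ct01 n y (a+i) H); auto. exfalso; apply (X i); auto; lia.
Qed.


Lemma dens_row n y : 1 <= n -> Omegan n y ->
  forall b, exists j, 0 < j <= Z.of_nat (Z.to_nat (n+2)) /\ rt y (b+j) = 0.
Proof. intros Hn H b. apply (dens_col n (yT y) Hn (Omegan_T n y H) b). Qed.

Definition sig (k P i : Z) : Z := if orb (k =? 1) (P + 2 <=? i) then 1 else 0.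

Lemma mono01 (g : Z -> Z) (w : Z) : 1 <= w -> (forall i, 1 <= i <= w -> 0 <= g i <= 1) ->
  (forall i, 1 <= i < w -> g i <= g (i+1)) ->
  exists P, 0 <= P <= w-1 /\ (g 1 = 1 -> P = 0) /\ forall i, 1 <= i <= w -> g i = sig (g 1) P i.
Proof.
  intros Hw. replace w with (1 + Z.of_nat (Z.to_nat (w-1))) by lia. generalize (Z.to_nat (w-1)) as d.
  clear w Hw. induction d; intros Hr Hm.
  - exists 0. split; [lia|]. split; auto. intros i Hi. assert (i = 1) by lia. subst. unfold sig.
    destruct (Hr 1 ltac:(lia)). destruct (Z.eqb_spec (g 1) 1). rewrite e; reflexivity.
    simpl. assert (g 1 = 0) by lia. auto.
  - destruct IHd as (P&HP&H1&H2). intros; apply Hr; lia. intros; apply Hm; lia.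
    assert (Hd := Hr (1 + Z.of_nat (S d)) ltac:(lia)).
    destruct (Z.eq_dec (g (1 + Z.of_nat (S d))) 1) as [E|E].
    + exists P. split; [lia|]. split; auto. intros i Hi.
      destruct (Z.eq_dec i (1 + Z.of_nat (S d))) as [->|Ne]. 2: apply H2; lia.
      rewrite E. unfold sig. destruct (Z.leb_spec (P+2) (1 + Z.of_nat (S d))); [|lia].
      rewrite Bool.orb_true_r. reflexivity.
    + assert (Hw := Hm (1 + Z.of_nat d) ltac:(lia)). replace (1 + Z.of_nat d + 1) with (1 + Z.of_nat (S d)) in Hw by lia.
      assert (G0 : g (1 + Z.of_nat d) = 0) by (specialize (Hr (1 + Z.of_nat d)); lia).
      assert (S0 := H2 (1 + Z.of_nat d) ltac:(lia)). rewrite G0 in S0. unfold sig in S0.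
      destruct (Z.eqb_spec (g 1) 1); [cbn in S0; lia|]. cbn [orb] in S0.
      destruct (Z.leb_spec (P+2) (1 + Z.of_nat d)); [cbn in S0; lia|].
      exists (Z.of_nat (S d)). split; [lia|]. split; [intro; contradiction|]. intros i Hi.
      unfold sig. destruct (Z.eqb_spec (g 1) 1); [contradiction|]. cbn [orb].
      destruct (Z.leb_spec (Z.of_nat (S d) + 2) i); [lia|].
      destruct (Z.eq_dec i (1 + Z.of_nat (S d))) as [->|Ne]. lia.
      rewrite H2 by lia. unfold sig. destruct (Z.eqb_spec (g 1) 1); [contradiction|]. cbn [orb].
      destruct (Z.leb_spec (P+2) i); [lia|reflexivity].
Qed.

Ltac dleb := repeat match goal with
  | |- context[?a <=? ?b] => destruct (Z.leb_spec a b)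
  | H : context[?a <=? ?b] |- _ => destruct (Z.leb_spec a b)
  | |- context[?a =? ?b] => destruct (Z.eqb_spec a b)
  | H : context[?a =? ?b] |- _ => destruct (Z.eqb_spec a b)
  end.

Lemma V_eta (v : V) : v = (l0 v, l1 v, l2 v).
Proof. destruct v as [[a b] c]; reflexivity. Qed.

Lemma RS n y p q w : 1 <= n -> Omegan n y -> rt y q = 0 -> ct y p = 0 -> 0 < w ->
  (forall i, 0 < i < w -> ct y (p+i) = 1) -> ct y (p+w) = 0 ->
  exists k l r s kE lE rE sE P,
    y p q = jtile n k l r s /\ jc k l r s /\ y (p+w) q = jtile n kE lE rE sE /\ jc kE lE rE sE /\
    w = n + 1 + rE - l /\ 0 <= P <= w - 1 /\ (k = 1 -> P = 0) /\ sE = sig k P w /\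
    forall i, 0 < i < w -> y (p+i) q = rtile n (sig k P i) (sig k P (i+1)) (l+i-1).
Proof.
  intros Hn H Hr Hc Hw Hmid Hc'.
  destruct (clsJ n y p q H Hr Hc) as (k&l&r&s&Jc&EJ).
  destruct (clsJ n y (p+w) q H Hr Hc') as (kE&lE&rE&sE&JcE&EJE).
  set (g := fun i => l1 (LEFT (y (p+i) q))).
  assert (LL : forall i, 1 <= i <= w -> LEFT (y (p+i) q) = (0, g i, l + i - 1)).
  { intros i Hi. rewrite (V_eta (LEFT (y (p+i) q))). unfold g. f_equal; [f_equal|].
    - rewrite (rowcst n y) by auto. auto.
    - assert (E := hrun n y p q (i-1) H ltac:(lia)).
      rewrite EJ in E. cbn in E. rewrite (Yh n) in E by auto. replace (p + (i-1) + 1) with (p+i) in E by lia.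
      rewrite E. lia. intros j Hj; apply Hmid; lia. }
  assert (TI : forall i, 0 < i < w -> y (p+i) q = rtile n (g i) (g (i+1)) (l+i-1) /\ 0 <= g i <= g (i+1) /\ g (i+1) <= 1).
  { intros i Hi. destruct (clsR n y (p+i) q H Hr (Hmid i Hi)) as (s0&s1&i0&Rc&ER).
    assert (L1 := LL i ltac:(lia)). assert (L2 := LL (i+1) ltac:(lia)).
    rewrite ER in L1. cbn in L1. replace (p + (i+1)) with ((p+i)+1) in L2 by lia.
    rewrite <- (Yh n) in L2 by auto. rewrite ER in L2. cbn in L2.
    inversion L1. inversion L2. rewrite ER. unfold rowc in Rc. split. f_equal; lia. lia. }
  assert (G1 : g 1 = k).
  { assert (L1 := LL 1 ltac:(lia)). rewrite <- (Yh n) in L1 by auto. rewrite EJ in L1. cbn in L1.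
    inversion L1; auto. }
  assert (GW : g w = sE /\ l + w - 1 = rE + n).
  { assert (L1 := LL w ltac:(lia)). rewrite EJE in L1. cbn in L1. inversion L1; split; auto; lia. }
  assert (JJ : 0 <= k <= l /\ l <= 1 /\ 0 <= r <= s /\ s <= 1) by (destruct Jc as (J1&J2&_); rewrite jpair_iff in J1, J2; lia).
  assert (JJE : 0 <= kE <= lE /\ lE <= 1 /\ 0 <= rE <= sE /\ sE <= 1) by (destruct JcE as (J1&J2&_); rewrite jpair_iff in J1, J2; lia).
  destruct (mono01 g w) as (P&HP&HP1&HPs).
  { lia. }
  { intros i Hi. destruct (Z.eq_dec i w) as [E|]. rewrite E. destruct GW as [GW1 _]. rewrite GW1. lia. specialize (TI i ltac:(lia)). lia. }
  { intros i Hi. specialize (TI i ltac:(lia)). lia. }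
  rewrite G1 in HP1, HPs.
  exists k, l, r, s, kE, lE, rE, sE, P.
  split; auto. split; auto. split; auto. split; auto. split; [lia|]. split; [lia|]. split; auto.
  split. rewrite <- HPs by lia. lia.
  intros i Hi. destruct (TI i Hi) as (T1&_). rewrite T1. rewrite <- !HPs by lia. reflexivity.
Qed.


Lemma jc_sym k l r s : jc k l r s -> jc r s k l.
Proof. unfold jc. intros (A1&A2&A3&A4). repeat split; auto; intros (->&->&->&->); auto. Qed.

Lemma hat_jtile n k l r s : hat (jtile n k l r s) = jtile n r s k l.
Proof. reflexivity. Qed.
Lemma hat_rtile n s s' i : hat (rtile n s s' i) = htile n s s' i.
Proof. reflexivity. Qed.

Lemma CS n y p q h : 1 <= n -> Omegan n y -> ct y p = 0 -> rt y q = 0 -> 0 < h ->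
  (forall j, 0 < j < h -> rt y (q+j) = 1) -> rt y (q+h) = 0 ->
  exists k l r s kN lN rN sN P,
    y p q = jtile n k l r s /\ jc k l r s /\ y p (q+h) = jtile n kN lN rN sN /\ jc kN lN rN sN /\
    h = n + 1 + kN - s /\ 0 <= P <= h - 1 /\ (r = 1 -> P = 0) /\ lN = sig r P h /\
    forall j, 0 < j < h -> y p (q+j) = htile n (sig r P j) (sig r P (j+1)) (s+j-1).
Proof.
  intros Hn H Hc Hr Hh Hmid Hr'.
  destruct (RS n (yT y) q p h Hn (Omegan_T n y H)) as (k&l&r&s&kE&lE&rE&sE&P&E1&J1&E2&J2&W&HP&HP1&HsE&HT); auto.
  exists r, s, k, l, rE, sE, kE, lE, P.
  unfold yT in E1, E2.
  assert (F1 := f_equal hat E1). assert (F2 := f_equal hat E2). rewrite hat_hat, hat_jtile in F1, F2.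
  split; auto. split. apply jc_sym; auto. split; auto. split. apply jc_sym; auto.
  split; auto. split; auto. split; auto. split; auto.
  intros j Hj. specialize (HT j Hj). unfold yT in HT. assert (F3 := f_equal hat HT).
  rewrite hat_hat, hat_rtile in F3. exact F3.
Qed.

Lemma row11_width n y a b w : 1 <= n -> Omegan n y -> rt y b = 1 -> 0 < w ->
  (forall i, 0 < i < w -> ct y (a+i) = 1) -> w <= n + 1.
Proof.
  intros Hn H Hr Hw Hm.
  assert (E := hrun n y a b (w-1) H ltac:(lia)).
  destruct (lab_V n y a b Hn H) as (V1&_). destruct (lab_V n y (a+(w-1)) b Hn H) as (V2&_).
  assert (R1 : l0 (RIGHT (y a b)) = 1).
  { tfacts n y a b H. destruct (TnC_facts n _ T) as (F&_). lia. }
  destruct (RIGHT (y a b)) as [[x1 x2] x3] eqn:ER. unfold in_Vn, l0, l2 in *. cbn in *.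
  destruct (RIGHT (y (a + (w-1)) b)) as [[z1 z2] z3]. cbn in *. rewrite E in V2. lia.
  intros i Hi; apply Hm; lia.
Qed.

Lemma N1 n y p q w : 1 <= n -> Omegan n y -> rt y q = 0 -> rt y (q+1) = 0 -> ct y p = 0 -> 0 < w ->
  (forall i, 0 < i < w -> ct y (p+i) = 1) -> ct y (p+w) = 0 -> w = n + 2 ->
  y (p+1) q = rtile n 0 1 0 /\ y (p+1) (q+1) = rtile n 0 0 0.
Proof.
  intros Hn H Hr Hr1 Hc Hw Hm Hc' Ew.
  destruct (CS n y p q 1 Hn H Hc Hr ltac:(lia)) as (k&l&r&s&kN&lN&rN&sN&P&_&J1&_&J2&Eh&_); auto.
  { intros; lia. }
  assert (n = 1).
  { destruct J1 as (_&J1&_). destruct J2 as (J2&_). rewrite jpair_iff in J1, J2. lia. }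
  subst n.
  destruct (RS 1 y p q w Hn H Hr Hc Hw Hm Hc') as (k0&l0'&r0&s0&kE&lE&rE&sE&P0&_&Ja&_&Jb&W0&HP0&HP01&HsE0&T0).
  destruct (RS 1 y p (q+1) w Hn H Hr1 Hc Hw Hm Hc') as (k1&l1'&r1&s1&kE1&lE1&rE1&sE1&P1&_&Jc&_&Jd&W1&HP1&HP11&HsE1&T1).
  assert (A0 : 0 <= k0 <= l0' /\ l0' <= 1 /\ 0 <= rE <= sE /\ sE <= 1).
  { destruct Ja as (X&_). destruct Jb as (_&Y&_). rewrite jpair_iff in X, Y. lia. }
  assert (A1 : 0 <= k1 <= l1' /\ l1' <= 1 /\ 0 <= rE1 <= sE1 /\ sE1 <= 1).
  { destruct Jc as (X&_). destruct Jd as (_&Y&_). rewrite jpair_iff in X, Y. lia. }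
  assert (k0 = 0 /\ l0' = 0 /\ rE = 1 /\ sE = 1 /\ k1 = 0 /\ l1' = 0 /\ rE1 = 1 /\ sE1 = 1) as (->&->&->&->&->&->&->&->) by lia.
  assert (V1 := Yv 1 y (p+1) q H). assert (V2 := Yv 1 y (p+2) q H).
  rewrite (T0 1), (T1 1) in V1 by lia. rewrite (T0 2), (T1 2) in V2 by lia.
  rewrite W0 in HsE1. replace (1+1+1-0) with 3 in HsE1 by lia.
  rewrite (T0 1), (T1 1) by lia.
  unfold sig in *. dleb; cbn in *; try lia; inversion V1; inversion V2; try lia;
  split; unfold rtile; repeat f_equal; lia.
Qed.

Lemma Wbound n y p q w : 1 <= n -> Omegan n y -> rt y q = 0 -> ct y p = 0 -> 0 < w ->
  (forall i, 0 < i < w -> ct y (p+i) = 1) -> ct y (p+w) = 0 -> w <= n + 1.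
Proof.
  intros Hn H Hr Hc Hw Hm Hc'.
  destruct (RS n y p q w Hn H Hr Hc Hw Hm Hc') as (k&l&r&s&kE&lE&rE&sE&P&_&Ja&_&Jb&W0&_).
  assert (A0 : 0 <= k <= l /\ l <= 1 /\ 0 <= rE <= sE /\ sE <= 1).
  { destruct Ja as (X&_). destruct Jb as (_&Y&_). rewrite jpair_iff in X, Y. lia. }
  destruct (Z.eq_dec w (n+2)) as [Ew|]; [|lia]. exfalso.
  destruct (rt01 n y (q+1) H) as [R1|R1].
  2:{ assert (w <= n+1) by (apply (row11_width n y p (q+1) w); auto). lia. }
  destruct (N1 n y p q w Hn H Hr R1 Hc Hw Hm Hc' Ew) as (_&X1).
  destruct (rt01 n y (q+1+1) H) as [R2|R2].
  2:{ assert (w <= n+1) by (apply (row11_width n y p (q+1+1) w); auto). lia. }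
  destruct (N1 n y p (q+1) w Hn H R1 R2 Hc Hw Hm Hc' Ew) as (X2&_).
  rewrite X1 in X2. unfold rtile, mkT in X2. inversion X2.
Qed.

Lemma Hbound n y p q h : 1 <= n -> Omegan n y -> ct y p = 0 -> rt y q = 0 -> 0 < h ->
  (forall j, 0 < j < h -> rt y (q+j) = 1) -> rt y (q+h) = 0 -> h <= n + 1.
Proof.
  intros Hn H Hc Hr Hh Hm Hr'. apply (Wbound n (yT y) q p h Hn (Omegan_T n y H)); auto.
Qed.

Lemma jtile_inj n k l r s k' l' r' s' : jtile n k l r s = jtile n k' l' r' s' -> k = k' /\ l = l' /\ r = r' /\ s = s'.
Proof. unfold jtile, mkT. intros E. inversion E. lia. Qed.

Lemma row_word n (y : config) p q w k l r s rE P : 1 <= n ->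
  y p q = jtile n k l r s -> w = n + 1 + rE - l -> 0 <= rE <= 1 -> 0 <= k <= l -> l <= 1 ->
  0 <= P <= w - 1 -> (k = 1 -> P = 0) -> w <= n + 1 ->
  (forall i, 0 < i < w -> y (p+i) q = rtile n (sig k P i) (sig k P (i+1)) (l+i-1)) ->
  in_Vn n (dec n l k P (w-1-P)) /\
  word_ok n (dec n l k P (w-1-P)) (fun i => BOTTOM (y (p + Z.of_nat i) q)) (Z.to_nat w).
Proof.
  intros Hn EJ Ew HrE Hk Hl HP HP1 Hw HT.
  replace (Z.to_nat w) with (Z.to_nat (P + (w-1-P) + 1)) by lia.
  apply dec_ok; try lia.
  - replace (p + Z.of_nat 0) with p by lia. rewrite EJ. cbn. f_equal. lia.
  - intros i Hi Hi2. rewrite HT by lia. cbn. f_equal. unfold sig. dleb; cbn; lia.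
Qed.

Lemma col_word n (y : config) p q h k l r s kN P : 1 <= n ->
  y p q = jtile n k l r s -> h = n + 1 + kN - s -> 0 <= kN <= 1 -> 0 <= r <= s -> s <= 1 ->
  0 <= P <= h - 1 -> (r = 1 -> P = 0) -> h <= n + 1 ->
  (forall j, 0 < j < h -> y p (q+j) = htile n (sig r P j) (sig r P (j+1)) (s+j-1)) ->
  in_Vn n (dec n s r P (h-1-P)) /\
  word_ok n (dec n s r P (h-1-P)) (fun j => LEFT (y p (q + Z.of_nat j))) (Z.to_nat h).
Proof.
  intros Hn EJ Ew HrE Hk Hl HP HP1 Hw HT.
  replace (Z.to_nat h) with (Z.to_nat (P + (h-1-P) + 1)) by lia.
  apply dec_ok; try lia.
  - replace (q + Z.of_nat 0) with q by lia. rewrite EJ. cbn. f_equal. lia.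
  - intros i Hi Hi2. rewrite HT by lia. cbn. f_equal. unfold sig. dleb; cbn; lia.
Qed.

Definition ind (b : bool) : Z := if b then 1 else 0.

Lemma sig_thr k P i : 0 <= k <= 1 -> (k = 1 -> P = 0) -> 1 <= i -> sig k P i = ind (P - 2*k + 2 <=? i).
Proof. intros. unfold sig, ind. dleb; cbn; lia. Qed.

Lemma rel_summary (X Y h n w : Z) :
  (forall i, 1 <= i <= w-1 -> ind (X+2 <=? i) + h = n + ind (Y+1 <=? i)) -> n <= h <= n+1 ->
  (h = n+1 -> w >= 2 -> X >= w - 2 /\ Y <= 0) /\
  (h = n -> Z.min (Z.max (X+2) 1) w = Z.min (Z.max (Y+1) 1) w).
Proof.
  intros H Hh. split.
  - intros E Hw. assert (A := H 1 ltac:(lia)). assert (B := H (w-1) ltac:(lia)).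
    unfold ind in *. dleb; lia.
  - intros E. destruct (Z.lt_trichotomy (Z.min (Z.max (X+2) 1) w) (Z.min (Z.max (Y+1) 1) w)) as [L|[L|L]]; auto.
    + assert (A := H (Z.min (Z.max (X+2) 1) w) ltac:(lia)). unfold ind in *. dleb; lia.
    + assert (A := H (Z.min (Z.max (Y+1) 1) w) ltac:(lia)). unfold ind in *. dleb; lia.
Qed.

Ltac peq := repeat match goal with |- (_, _) = (_, _) => f_equal end.

Lemma dec_eq n e fb P Q : dec n e fb P Q = (n-P-Q, n-P-Q+1-e, if fb =? 1 then n-P-Q else n+1-Q).
Proof. reflexivity. Qed.

Lemma caseJ n k l r s rE sE kN lN PB PN PL PE :
  1 <= n -> 0 <= k <= l -> l <= 1 -> 0 <= r <= s -> s <= 1 -> 0 <= rE <= sE -> sE <= 1 ->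
  0 <= kN <= lN -> lN <= 1 -> rE = l -> kN = s ->
  0 <= PB <= n -> (k = 1 -> PB = 0) -> 0 <= PN <= n -> (kN = 1 -> PN = 0) ->
  0 <= PL <= n -> (r = 1 -> PL = 0) -> 0 <= PE <= n -> (rE = 1 -> PE = 0) ->
  sE = ind (PB - 2*k + 2 <=? n+1) -> lN = ind (PL - 2*r + 2 <=? n+1) ->
  PB - 2*k >= n - 1 -> PN - 2*kN <= 0 -> PL - 2*r >= n - 1 -> PE - 2*rE <= 0 ->
  TnC' n (mkT (dec n sE rE PE (n+1-1-PE)) (dec n lN kN PN (n+1-1-PN)) (dec n s r PL (n+1-1-PL)) (dec n l k PB (n+1-1-PB))).
Proof.
  intros. rewrite !dec_eq.
  assert (k = 0) by lia. assert (r = 0) by lia. subst k r.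
  assert (PN = 0) by lia. assert (PE = 0) by lia. subst PN PE.
  unfold ind in *. cbn [Z.eqb] in *.
  replace (mkT _ _ _ _) with (jtile n (1 - sE) (1 - l) (1 - lN) (1 - s)).
  + apply cJ'; rewrite jpair_iff; dleb; lia.
  + unfold jtile, mkT. dleb; peq; lia.
Qed.

Lemma bin01 x : 0 <= x <= 1 -> x = 0 \/ x = 1.
Proof. lia. Qed.

Lemma caseW n k r PB PN PL PE :
  1 <= n -> 0 <= k <= 1 -> 0 <= r <= 1 ->
  0 <= PB <= n - 1 -> (k = 1 -> PB = 0) -> 0 <= PN <= n - 1 ->
  0 <= PL <= n - 1 -> (r = 1 -> PL = 0) -> 0 <= PE <= n - 1 ->
  1 = ind (PB - 2*k + 2 <=? n) -> 1 = ind (PL - 2*r + 2 <=? n) ->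
  Z.min (Z.max (PB - 2*k + 2) 1) n = Z.min (Z.max (PN - 2*0 + 1) 1) n ->
  Z.min (Z.max (PL - 2*r + 2) 1) n = Z.min (Z.max (PE - 2*0 + 1) 1) n ->
  TnC' n (mkT (dec n 1 0 PE (n-1-PE)) (dec n 1 0 PN (n-1-PN)) (dec n 1 r PL (n-1-PL)) (dec n 1 k PB (n-1-PB))).
Proof.
  intros Hn Hk Hr HPB HPB1 HPN HPL HPL1 HPE I1 I2 C1 C2. rewrite !dec_eq.
  unfold ind in *. destruct (Z.leb_spec (PB - 2*k + 2) n); try lia. destruct (Z.leb_spec (PL - 2*r + 2) n); try lia.
  destruct (bin01 k Hk) as [->| ->]; destruct (bin01 r Hr) as [->| ->]; cbn [Z.eqb Pos.eqb].
  - assert (PN = PB + 1) by lia. assert (PE = PL + 1) by lia. subst PN PE.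
    replace (mkT _ _ _ _) with (wtile (PL+2) (PB+2)). apply cW'; lia. unfold wtile, mkT; peq; lia.
  - assert (PN = PB + 1) by lia. assert (PE = 0) by lia. subst PN PE.
    replace (mkT _ _ _ _) with (wtile 1 (PB+2)). apply cW'; lia. unfold wtile, mkT; peq; lia.
  - assert (PN = 0) by lia. assert (PE = PL + 1) by lia. subst PN PE.
    replace (mkT _ _ _ _) with (wtile (PL+2) 1). apply cW'; lia. unfold wtile, mkT; peq; lia.
  - assert (PN = 0) by lia. assert (PE = 0) by lia. subst PN PE.
    replace (mkT _ _ _ _) with (wtile 1 1). apply cW'; lia. unfold wtile, mkT; peq; lia.
Qed.

Lemma caseR n k r s sE PB PN PL PE :
  1 <= n -> 0 <= k <= 1 -> 0 <= r <= s -> s <= 1 -> 0 <= sE <= 1 ->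
  0 <= PB <= n - 1 -> (k = 1 -> PB = 0) -> 0 <= PN <= n - 1 -> (s = 1 -> PN = 0) ->
  0 <= PL <= n -> (r = 1 -> PL = 0) -> 0 <= PE <= n ->
  sE = ind (PB - 2*k + 2 <=? n) -> 1 = ind (PL - 2*r + 2 <=? n+1) ->
  (n >= 2 -> PB - 2*k >= n - 2 /\ PN - 2*s <= 0) ->
  Z.min (Z.max (PL - 2*r + 2) 1) (n+1) = Z.min (Z.max (PE - 2*0 + 1) 1) (n+1) ->
  TnC' n (mkT (dec n sE 0 PE (n+1-1-PE)) (dec n 1 s PN (n-1-PN)) (dec n s r PL (n+1-1-PL)) (dec n 1 k PB (n-1-PB))).
Proof.
  intros Hn Hk Hr Hs HsE HPB HPB1 HPN HPN1 HPL HPL1 HPE I1 I2 S1 C2. rewrite !dec_eq.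
  unfold ind in *. destruct (Z.leb_spec (PL - 2*r + 2) (n+1)); try lia.
  assert (PE = if r =? 1 then 0 else PL + 1) by (destruct (bin01 r ltac:(lia)) as [-> | ->]; cbn; lia).
  clear C2. subst PE.
  assert (s = 0 -> PN = 0) by (intros; destruct (Z.eq_dec n 1); lia).
  assert (k = 1 -> n = 1) by (intros; destruct (Z.eq_dec n 1); lia).
  replace (mkT _ _ _ _) with (rtile n (1 - s) (1 - sE) (if r =? 1 then 0 else PL + 1)).
  - apply cR'. unfold rowc'. dleb; lia.
  - unfold rtile, mkT. dleb; peq; try lia.
Qed.

Lemma caseH n k l r lN PB PN PL PE :
  1 <= n -> 0 <= k <= l -> l <= 1 -> 0 <= r <= 1 -> 0 <= lN <= 1 ->
  0 <= PB <= n -> (k = 1 -> PB = 0) -> 0 <= PN <= n ->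
  0 <= PL <= n - 1 -> (r = 1 -> PL = 0) -> 0 <= PE <= n - 1 -> (l = 1 -> PE = 0) ->
  1 = ind (PB - 2*k + 2 <=? n + 1) -> lN = ind (PL - 2*r + 2 <=? n) ->
  (n >= 2 -> PL - 2*r >= n - 2 /\ PE - 2*l <= 0) ->
  Z.min (Z.max (PB - 2*k + 2) 1) (n+1) = Z.min (Z.max (PN - 2*0 + 1) 1) (n+1) ->
  TnC' n (mkT (dec n 1 l PE (n-1-PE)) (dec n lN 0 PN (n+1-1-PN)) (dec n 1 r PL (n-1-PL)) (dec n l k PB (n+1-1-PB))).
Proof.
  intros Hn Hk Hl Hr HlN HPB HPB1 HPN HPL HPL1 HPE HPE1 I1 I2 S1 C2. rewrite !dec_eq.
  unfold ind in *. destruct (Z.leb_spec (PB - 2*k + 2) (n+1)); try lia.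
  assert (PN = if k =? 1 then 0 else PB + 1) by (destruct (bin01 k ltac:(lia)) as [-> | ->]; cbn; lia).
  clear C2. subst PN.
  assert (l = 0 -> PE = 0) by (intros; destruct (Z.eq_dec n 1); lia).
  assert (r = 1 -> n = 1) by (intros; destruct (Z.eq_dec n 1); lia).
  replace (mkT _ _ _ _) with (htile n (1 - l) (1 - lN) (if k =? 1 then 0 else PB + 1)).
  - apply cH'. unfold rowc'. dleb; lia.
  - unfold htile, mkT. dleb; peq; try lia.
Qed.

Lemma ind_shift a i : ind (a + 2 <=? i + 1) = ind (a + 1 <=? i).
Proof. unfold ind. dleb; lia. Qed.

Lemma Block n y p q w h : 1 <= n -> Omegan n y -> ct y p = 0 -> rt y q = 0 ->
  0 < w -> (forall i, 0 < i < w -> ct y (p+i) = 1) -> ct y (p+w) = 0 ->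
  0 < h -> (forall j, 0 < j < h -> rt y (q+j) = 1) -> rt y (q+h) = 0 ->
  exists t, TnC' n t /\
    word_ok n (BOTTOM t) (fun i => BOTTOM (y (p + Z.of_nat i) q)) (Z.to_nat w) /\
    word_ok n (LEFT t) (fun j => LEFT (y p (q + Z.of_nat j))) (Z.to_nat h) /\
    word_ok n (RIGHT t) (fun j => LEFT (y (p+w) (q + Z.of_nat j))) (Z.to_nat h) /\
    word_ok n (TOP t) (fun i => BOTTOM (y (p + Z.of_nat i) (q+h))) (Z.to_nat w).
Proof.
  intros Hn H Hc Hr Hw Hmc Hc' Hh Hmr Hr'.
  assert (Hc'' : ct y (p + w) = 0) by auto.
  destruct (RS n y p q w Hn H Hr Hc Hw Hmc Hc') as (k&l&r&s&kE&lE&rE&sE&PB&EJ&Jc&EJE&JcE&Ew&HPB&HPB1&HsE&TB).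
  destruct (RS n y p (q+h) w Hn H Hr' Hc Hw Hmc Hc') as (kN&lN&rN&sN&kNE&lNE&rNE&sNE&PN&EJN&JcN&EJNE&JcNE&EwN&HPN&HPN1&HsNE&TN).
  destruct (CS n y p q h Hn H Hc Hr Hh Hmr Hr') as (k1&l1&r1&s1&kN1&lN1&rN1&sN1&PL&EJ1&_&EJN1&_&Eh&HPL&HPL1&HlN&TL).
  destruct (CS n y (p+w) q h Hn H Hc' Hr Hh Hmr Hr') as (k2&l2'&r2&s2&kNE2&lNE2&rNE2&sNE2&PE&EJ2&_&EJNE2&_&EhE&HPE&HPE1&HlNE&TE).
  rewrite EJ in EJ1. apply jtile_inj in EJ1. destruct EJ1 as (<-&<-&<-&<-).
  rewrite EJN in EJN1. apply jtile_inj in EJN1. destruct EJN1 as (<-&<-&<-&<-).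
  rewrite EJE in EJ2. apply jtile_inj in EJ2. destruct EJ2 as (<-&<-&<-&<-).
  rewrite EJNE in EJNE2. apply jtile_inj in EJNE2. destruct EJNE2 as (<-&<-&<-&<-).
  assert (WB := Wbound n y p q w Hn H Hr Hc Hw Hmc Hc').
  assert (HB := Hbound n y p q h Hn H Hc Hr Hh Hmr Hr').
  assert (B1 : 0 <= k <= l /\ l <= 1 /\ 0 <= r <= s /\ s <= 1) by
    (destruct Jc as (X&Y&_); rewrite jpair_iff in X, Y; lia).
  assert (B2 : 0 <= kE <= lE /\ lE <= 1 /\ 0 <= rE <= sE /\ sE <= 1) by
    (destruct JcE as (X&Y&_); rewrite jpair_iff in X, Y; lia).
  assert (B3 : 0 <= kN <= lN /\ lN <= 1 /\ 0 <= rN <= sN /\ sN <= 1) by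
    (destruct JcN as (X&Y&_); rewrite jpair_iff in X, Y; lia).
  assert (B4 : 0 <= kNE <= lNE /\ lNE <= 1 /\ 0 <= rNE <= sNE /\ sNE <= 1) by
    (destruct JcNE as (X&Y&_); rewrite jpair_iff in X, Y; lia).
  rewrite (sig_thr k PB w) in HsE by lia. rewrite (sig_thr r PL h) in HlN by lia.
  destruct (row_word n y p q w k l r s rE PB) as (Vd&Wd); auto; try lia.
  destruct (row_word n y p (q+h) w kN lN rN sN rNE PN) as (Vb&Wb); auto; try lia.
  destruct (col_word n y p q h k l r s kN PL) as (Vc&Wc); auto; try lia.
  destruct (col_word n y (p+w) q h kE lE rE sE kNE PE) as (Va&Wa); auto; try lia.
  assert (Rc : forall i, 1 <= i <= w-1 -> ind (PB - 2*k + 2 <=? i) + h = n + ind (PN - 2*kN + 1 <=? i)).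
  { intros i Hi.
    assert (V := vrun n y (p+i) q (h-1) H ltac:(lia) ltac:(intros j Hj; apply Hmr; lia)).
    rewrite (Yv n) in V by auto. replace (q + (h-1) + 1) with (q+h) in V by lia.
    rewrite (TN i), (TB i) in V by lia. cbn [l2 TOP BOTTOM rtile mkT fst snd] in V.
    rewrite (sig_thr kN PN (i+1)) in V by lia. rewrite (sig_thr k PB i) in V by lia. rewrite <- ind_shift. lia. }
  assert (Rr : forall j, 1 <= j <= h-1 -> ind (PL - 2*r + 2 <=? j) + w = n + ind (PE - 2*rE + 1 <=? j)).
  { intros j Hj.
    assert (V := hrun n y p (q+j) (w-1) H ltac:(lia) ltac:(intros i Hi; apply Hmc; lia)).
    rewrite (Yh n) in V by auto. replace (p + (w-1) + 1) with (p+w) in V by lia.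
    rewrite (TE j), (TL j) in V by lia. cbn [l2 RIGHT LEFT htile mkT fst snd] in V.
    rewrite (sig_thr rE PE (j+1)) in V by lia. rewrite (sig_thr r PL j) in V by lia. rewrite <- ind_shift. lia. }
  destruct (rel_summary _ _ _ _ _ Rc ltac:(lia)) as (S1&S2).
  destruct (rel_summary _ _ _ _ _ Rr ltac:(lia)) as (S3&S4).
  clear Rc Rr.
  exists (mkT (dec n sE rE PE (h-1-PE)) (dec n lN kN PN (w-1-PN)) (dec n s r PL (h-1-PL)) (dec n l k PB (w-1-PB))).
  split; [|split; [exact Wd|split; [exact Wc|split; [exact Wa|exact Wb]]]].
  clear Wa Wb Wc Wd Va Vb Vc Vd TB TN TL TE EJ EJN EJE EJNE.
  revert S1 S2 S3 S4.
  assert (w = n \/ w = n + 1) as [-> | ->] by lia; assert (h = n \/ h = n + 1) as [-> | ->] by lia;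
  intros S1 S2 S3 S4.
  - clear S1 S3. specialize (S2 eq_refl). specialize (S4 eq_refl). revert S2 S4.
    assert (l = 1) by lia. assert (rE = 0) by lia. assert (s = 1) by lia. assert (kN = 0) by lia.
    assert (ES : sE = 1) by lia. assert (EL : lN = 1) by lia. subst l rE s kN. rewrite ES, EL in *. intros S2 S4.
    apply caseW; first [exact S2 | exact S4 | clear S2 S4; lia].
  - clear S2 S3. specialize (S1 eq_refl). specialize (S4 eq_refl). revert S1 S4.
    assert (l = 1) by lia. assert (rE = 0) by lia. assert (EL : lN = 1) by lia. assert (kN = s) by lia.
    subst l rE kN. rewrite EL in *. intros S1 S4.
    apply caseR; first [exact S1 | exact S4 | clear S1 S4; lia].
  - clear S1 S4. specialize (S2 eq_refl). specialize (S3 eq_refl). revert S2 S3.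
    assert (s = 1) by lia. assert (kN = 0) by lia. assert (ES : sE = 1) by lia. assert (rE = l) by lia.
    subst s kN rE. rewrite ES in *. intros S2 S3.
    apply caseH; first [exact S2 | exact S3 | clear S2 S3; lia].
  - clear S2 S4. destruct (S1 eq_refl ltac:(lia)). destruct (S3 eq_refl ltac:(lia)). clear S1 S3.
    assert (rE = l) by lia. assert (kN = s) by lia. subst rE kN.
    apply caseJ with (sE := sE) (lN := lN); lia.
Qed.

Lemma pat_unique n w h p1 p2 R1 T1 R2 T2 L B :
  valid_pattern n w h p1 R1 T1 L B -> valid_pattern n w h p2 R2 T2 L B ->
  forall i j, (i < w)%nat -> (j < h)%nat -> p1 i j = p2 i j.
Proof.
  intros (_&_&_&_&V1&H1&U1&B1&_&L1&_) (_&_&_&_&V2&H2&U2&B2&_&L2&_).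
  induction i as [|i IHi]; intros j Hi Hj; induction j as [|j IHj].
  - apply (TnC'_det n); try apply T'n_TnC'; auto.
    rewrite L1, L2; auto. rewrite B1, B2; auto.
  - apply (TnC'_det n); try apply T'n_TnC'; auto.
    rewrite L1, L2; auto. rewrite <- U1, <- U2 by lia. f_equal. apply IHj; lia.
  - apply (TnC'_det n); try apply T'n_TnC'; auto.
    rewrite <- H1, <- H2 by lia. f_equal. apply IHi; lia. rewrite B1, B2; auto.
  - apply (TnC'_det n); try apply T'n_TnC'; auto.
    rewrite <- H1, <- H2 by lia. f_equal. apply IHi; lia.
    rewrite <- U1, <- U2 by lia. f_equal. apply IHj; lia.
Qed.

Ltac yf := apply f_equal; apply f_equal2; lia.

Lemma yblock_valid n y p q w h t : 1 <= n -> Omegan n y -> 0 < w -> 0 < h ->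
  word_ok n (BOTTOM t) (fun i => BOTTOM (y (p + Z.of_nat i) q)) (Z.to_nat w) ->
  word_ok n (LEFT t) (fun j => LEFT (y p (q + Z.of_nat j))) (Z.to_nat h) ->
  word_ok n (RIGHT t) (fun j => LEFT (y (p+w) (q + Z.of_nat j))) (Z.to_nat h) ->
  word_ok n (TOP t) (fun i => BOTTOM (y (p + Z.of_nat i) (q+h))) (Z.to_nat w) ->
  valid_pattern n (Z.to_nat w) (Z.to_nat h) (fun i j => y (p + Z.of_nat i) (q + Z.of_nat j))
    (tau n (RIGHT t)) (tau n (TOP t)) (tau n (LEFT t)) (tau n (BOTTOM t)).
Proof.
  intros Hn H Hw Hh [WB1 WB2] [WL1 WL2] [WR1 WR2] [WT1 WT2].
  unfold valid_pattern. repeat split; auto.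
  - intros i j _ _. apply T'n_of. apply TnC_TnC'. apply Ytile; auto.
  - intros i j _ _. rewrite (Yh n) by auto. yf.
  - intros i j _ _. rewrite (Yv n) by auto. yf.
  - intros i Hi. rewrite WB2 by auto. yf.
  - intros i Hi. rewrite WT2 by auto. rewrite (Yv n) by auto. yf.
  - intros j Hj. rewrite WL2 by auto. yf.
  - intros j Hj. rewrite WR2 by auto. rewrite (Yh n) by auto. yf.
Qed.

Lemma offset_eq (g E : Z -> Z) : (forall c, g c = E (c+1) - E c) -> forall m, offset g m = E m - E 0.
Proof.
  intros Hg.
  assert (P : forall k, psum g k = E (Z.of_nat k) - E 0).
  { induction k; cbn [psum]. simpl; lia. rewrite IHk, Hg. rewrite Nat2Z.inj_succ, <- Z.add_1_r. lia. }
  assert (N : forall k, nsum g k = E 0 - E (- Z.of_nat k)).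
  { induction k; cbn [nsum]. simpl; lia. rewrite IHk, Hg. rewrite Nat2Z.inj_succ.
    replace (- Z.succ (Z.of_nat k) + 1) with (- Z.of_nat k) by lia. lia. }
  intros m. unfold offset. destruct (Z.leb_spec 0 m).
  - rewrite P. f_equal. f_equal. lia.
  - rewrite N. replace (- Z.of_nat (Z.to_nat (-m))) with m by lia. lia.
Qed.

Theorem proposition6p9 (n : Z) (hn : 1 <= n) :
  forall y : config, Omegan n y ->
    exists (x : config) (k1 k2 : Z),
      Omega'n n x /\
      (exists z, is_omega'_config n x z) /\
      (forall z, is_omega'_config n x z -> sigma_shift k1 k2 z = y).
Proof.
  intros y Hy.
  destruct (enum_zeros (ct y) (Z.to_nat (n+2)) (dens_col n y hn Hy)) as (E&EZ&Einc&Egap&Ecov).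
  destruct (enum_zeros (rt y) (Z.to_nat (n+2)) (dens_row n y hn Hy)) as (F&FZ&Finc&Fgap&Fcov).
  assert (blk : forall m1 m2, exists t, TnC' n t /\
    word_ok n (BOTTOM t) (fun i => BOTTOM (y (E m1 + Z.of_nat i) (F m2))) (Z.to_nat (E (m1+1) - E m1)) /\
    word_ok n (LEFT t) (fun j => LEFT (y (E m1) (F m2 + Z.of_nat j))) (Z.to_nat (F (m2+1) - F m2)) /\
    word_ok n (RIGHT t) (fun j => LEFT (y (E (m1+1)) (F m2 + Z.of_nat j))) (Z.to_nat (F (m2+1) - F m2)) /\
    word_ok n (TOP t) (fun i => BOTTOM (y (E m1 + Z.of_nat i) (F (m2+1)))) (Z.to_nat (E (m1+1) - E m1))).
  { intros m1 m2.
    assert (X1 : E m1 + (E (m1+1) - E m1) = E (m1+1)) by lia.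
    assert (X2 : F m2 + (F (m2+1) - F m2) = F (m2+1)) by lia.
    destruct (Block n y (E m1) (F m2) (E (m1+1) - E m1) (F (m2+1) - F m2) hn Hy) as (t&T1&T2&T3&T4&T5).
    - apply EZ.
    - apply FZ.
    - specialize (Einc m1); lia.
    - intros i Hi. destruct (ct01 n y (E m1 + i) Hy); auto. exfalso; apply (Egap m1 (E m1 + i)); auto; lia.
    - rewrite X1. apply EZ.
    - specialize (Finc m2); lia.
    - intros j Hj. destruct (rt01 n y (F m2 + j) Hy); auto. exfalso; apply (Fgap m2 (F m2 + j)); auto; lia.
    - rewrite X2. apply FZ.
    - rewrite X1 in T4. rewrite X2 in T5. exists t; auto. }
  set (x := fun m1 m2 => proj1_sig (constructive_indefinite_description _ (blk m1 m2))).
  assert (Hx : forall m1 m2, TnC' n (x m1 m2) /\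
    word_ok n (BOTTOM (x m1 m2)) (fun i => BOTTOM (y (E m1 + Z.of_nat i) (F m2))) (Z.to_nat (E (m1+1) - E m1)) /\
    word_ok n (LEFT (x m1 m2)) (fun j => LEFT (y (E m1) (F m2 + Z.of_nat j))) (Z.to_nat (F (m2+1) - F m2)) /\
    word_ok n (RIGHT (x m1 m2)) (fun j => LEFT (y (E (m1+1)) (F m2 + Z.of_nat j))) (Z.to_nat (F (m2+1) - F m2)) /\
    word_ok n (TOP (x m1 m2)) (fun i => BOTTOM (y (E m1 + Z.of_nat i) (F (m2+1)))) (Z.to_nat (E (m1+1) - E m1))).
  { intros m1 m2. exact (proj2_sig (constructive_indefinite_description _ (blk m1 m2))). }
  clearbody x. clear blk.
  assert (CW : forall c, colw n x c = Z.to_nat (E (c+1) - E c)).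
  { intros c. unfold colw. destruct (Hx c 0) as (_&(W&_)&_). exact W. }
  assert (RH : forall r, rowh n x r = Z.to_nat (F (r+1) - F r)).
  { intros r. unfold rowh. destruct (Hx 0 r) as (_&_&(W&_)&_). exact W. }
  assert (OFF1 : forall m, offset (fun c => Z.of_nat (colw n x c)) m = E m - E 0).
  { apply offset_eq. intros c. rewrite CW. specialize (Einc c). lia. }
  assert (OFF2 : forall m, offset (fun r => Z.of_nat (rowh n x r)) m = F m - F 0).
  { apply offset_eq. intros c. rewrite RH. specialize (Finc c). lia. }
  assert (YV : forall m1 m2, valid_pattern n (colw n x m1) (rowh n x m2)
      (fun i j => y (E m1 + Z.of_nat i) (F m2 + Z.of_nat j))
      (tau n (RIGHT (x m1 m2))) (tau n (TOP (x m1 m2))) (tau n (LEFT (x m1 m2))) (tau n (BOTTOM (x m1 m2)))).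
  { intros m1 m2. rewrite CW, RH. destruct (Hx m1 m2) as (_&W1&W2&W3&W4).
    assert (X1 : E (m1+1) = E m1 + (E (m1+1) - E m1)) by lia.
    assert (X2 : F (m2+1) = F m2 + (F (m2+1) - F m2)) by lia.
    rewrite X1 in W3. rewrite X2 in W4.
    apply yblock_valid; auto. specialize (Einc m1); lia. specialize (Finc m2); lia. }
  exists x, (- E 0), (- F 0). split; [|split].
  - intros a b. destruct (Hx a b) as (T&_&_&W3&W4). destruct (Hx (a+1) b) as (T'&_&W2'&_&_).
    destruct (Hx a (b+1)) as (T''&W1''&_&_&_).
    destruct (TnC'_Vn n _ hn T) as (V1&V2&_). destruct (TnC'_Vn n _ hn T') as (_&_&V3&_).
    destruct (TnC'_Vn n _ hn T'') as (_&_&_&V4).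
    split; [|split].
    + apply T'n_of; auto.
    + eapply word_ok_inj; eauto.
    + eapply word_ok_inj; eauto.
  - exists (fun a b => y (a + E 0) (b + F 0)). intros m1 m2. unfold is_omega'_tile.
    rewrite OFF1, OFF2.
    replace (fun i j : nat => y (E m1 - E 0 + Z.of_nat i + E 0) (F m2 - F 0 + Z.of_nat j + F 0))
      with (fun i j => y (E m1 + Z.of_nat i) (F m2 + Z.of_nat j)).
    apply YV.
    apply functional_extensionality; intros i. apply functional_extensionality; intros j.
    f_equal; lia.
  - intros z Hz. apply functional_extensionality; intros a. apply functional_extensionality; intros b.
    unfold sigma_shift.
    destruct (Ecov a) as (m1&Ha). destruct (Fcov b) as (m2&Hb).
    specialize (Hz m1 m2). unfold is_omega'_tile in Hz. rewrite OFF1, OFF2 in Hz.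
    assert (U := pat_unique _ _ _ _ _ _ _ _ _ _ _ Hz (YV m1 m2) (Z.to_nat (a - E m1)) (Z.to_nat (b - F m2))).
    rewrite CW, RH in U. specialize (U ltac:(lia) ltac:(lia)). cbv beta in U.
    rewrite !Z2Nat.id in U by lia.
    replace (a + - E 0) with (E m1 - E 0 + (a - E m1)) by lia.
    replace (b + - F 0) with (F m2 - F 0 + (b - F m2)) by lia.
    rewrite U. f_equal; lia.
Qed.
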